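(* Let $n\ge 2$ be an integer and define $f_n(x)=\frac{(n-x)^{n-1}}{e^{n-x}(n-1)!}$ for $x\le n$ and $f_n(x)=0$ for $x>n$. Then: (i) $f_n$ is unimodal in $x$ with maximum value $f_n(1)$ (attained at $x=1$), and $f_n(1)\sim \frac{1}{\sqrt{2\pi n}}$ as $n\to\infty$; (ii) for every real $x\ge0$, $f_n(1+x)\le f_n(1-x)$; (iii) for every real $z\ge0$ there is a unique real number $b=b(n,z)$ with $0\le b\le z$ and $f_n(1-z)=f_n(1+z-b)$.
   Context: $f_n$ is the density of $X_1+\cdots+X_n$ where the $X_i$ are independent with density $e^{x-1}$ for $x\le1$ and $0$ for $x>1$. *)

(* Defs.v *)
From Stdlib Require Import Reals.
From Coquelicot Require Import Coquelicot.
Open Scope R_scope.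

Definition f_dens (n : nat) (x : R) : R :=
  if Rle_dec x (INR n)
  then (INR n - x) ^ (n - 1) / (exp (INR n - x) * INR (Factorial.fact (n - 1)))
  else 0.

(* Main.v *)
From Stdlib Require Import Reals Lra Lia Psatz.
From Coquelicot Require Import Coquelicot.
From Stdlib Require Import Factorial.
Require Import Defs.
Open Scope R_scope.

Definition G (m : nat) (t : R) : R := t ^ m / (exp t * INR (fact m)).

Lemma fact_pos m : 0 < INR (fact m).
Proof. apply lt_0_INR. apply lt_O_fact. Qed.

Lemma G_pos m t : 0 < t -> 0 < G m t.
Proof.
intros. unfold G. apply Rdiv_lt_0_compat. apply pow_lt; auto.
apply Rmult_lt_0_compat. apply exp_pos. apply fact_pos.
Qed.

Lemma G_nonneg m t : 0 <= t -> 0 <= G m t.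
Proof.
intros. unfold G. apply Rmult_le_pos. apply pow_le; auto.
left. apply Rinv_0_lt_compat. apply Rmult_lt_0_compat. apply exp_pos. apply fact_pos.
Qed.

Lemma G0 m : (1 <= m)%nat -> G m 0 = 0.
Proof. intros. unfold G. rewrite pow_i by lia. unfold Rdiv. ring. Qed.

Lemma key r : 0 < r -> r <> 1 -> r * exp (1 - r) < 1.
Proof.
intros H1 H2. assert (H := exp_ineq1 (r - 1)). assert (r - 1 <> 0) by lra.
specialize (H H0). replace (1 - r) with (- (r - 1)) by ring. rewrite exp_Ropp.
assert (0 < exp (r - 1)) by apply exp_pos.
apply (Rmult_lt_reg_r (exp (r-1))); auto. field_simplify; lra.
Qed.

Lemma exp_INR_mult m y : exp (INR m * y) = exp y ^ m.
Proof.
induction m. simpl. rewrite Rmult_0_l. apply exp_0.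
rewrite S_INR. replace ((INR m + 1) * y) with (INR m * y + y) by ring.
rewrite exp_plus, IHm. simpl. ring.
Qed.

Lemma keym m r : (1 <= m)%nat -> 0 < r -> r <> 1 -> r ^ m * exp (INR m * (1 - r)) < 1.
Proof.
intros Hm H1 H2. rewrite exp_INR_mult, <- Rpow_mult_distr.
apply pow_lt_1_compat; [|lia]. split. left. apply Rmult_lt_0_compat; auto. apply exp_pos.
apply key; auto.
Qed.

Lemma G_ident m p q : 0 < p -> 0 < q -> G m p = ((p / q) ^ m * exp (q - p)) * G m q.
Proof.
intros Hp Hq.
 replace ((p/q)^m) with (p^m / q^m) by (unfold Rdiv; rewrite Rpow_mult_distr, pow_inv; ring).
  unfold G.
  unfold Rminus. rewrite exp_plus, exp_Ropp.
  assert (0 < exp p) by apply exp_pos. assert (0 < exp q) by apply exp_pos.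
  assert (0 < q ^ m) by (apply pow_lt; auto). assert (H4 := fact_pos m).
  field. repeat split; lra.
Qed.

Lemma Gratio m p q : (1 <= m)%nat -> 0 < p -> 0 < q -> p <> q ->
  q - p <= INR m * (1 - p / q) -> G m p < G m q.
Proof.
intros Hm Hp Hq Hpq Hc.
assert (E := G_ident m p q Hp Hq).
assert (Hl : (p / q) ^ m * exp (q - p) < 1).
{ eapply Rle_lt_trans; [|apply (keym m (p/q)); auto].
  apply Rmult_le_compat_l. apply pow_le. left. apply Rdiv_lt_0_compat; auto.
  destruct (Req_dec (q - p) (INR m * (1 - p / q))) as [->|]. lra.
  left. apply exp_increasing. lra.
  apply Rdiv_lt_0_compat; auto.
  intro Hr. apply Hpq. assert (p = p / q * q) by (field; lra). rewrite Hr in H. lra. }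
rewrite E. assert (0 < G m q) by (apply G_pos; auto). nra.
Qed.

Lemma G_inc m p q : (1 <= m)%nat -> 0 <= p -> p < q -> q <= INR m -> G m p < G m q.
Proof.
intros Hm Hp Hpq Hq.
destruct (Req_dec p 0) as [->|Hp0].
- rewrite G0 by auto. apply G_pos. lra.
- apply Gratio; auto; try lra.
  replace (q - p) with (q * (1 - p / q)) by (field; lra).
  apply Rmult_le_compat_r; auto.
  assert (p / q < 1). { apply (Rmult_lt_reg_r q). lra. field_simplify; lra. }
  lra.
Qed.

Lemma G_dec m p q : (1 <= m)%nat -> INR m <= p -> p < q -> G m q < G m p.
Proof.
intros Hm Hp Hpq.
assert (0 < INR m) by (apply lt_0_INR; lia).
apply Gratio; auto; try lra.
replace (p - q) with (p * (1 - q / p)) by (field; lra).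
assert (1 < q / p). { apply (Rmult_lt_reg_r p). lra. field_simplify; lra. }
nra.
Qed.
Lemma mono_le (f df : R -> R) a b : a <= b ->
  (forall x, a <= x <= b -> is_derive f x (df x)) ->
  (forall x, a <= x <= b -> 0 <= df x) -> f a <= f b.
Proof.
intros Hab Hd Hp. destruct (Req_dec a b) as [->|Hne]; [lra|].
destruct (MVT_cor3 f df a b) as [c [Hc1 [Hc2 Hc]]]; [lra| |].
- intros y H1 H2. apply is_derive_Reals. apply Hd; lra.
- rewrite Hc. assert (0 <= df c) by (apply Hp; lra). nra.
Qed.

Lemma L1 x : 0 <= x -> 2*x/(2+x) <= ln (1+x).
Proof.
intros Hx.
assert (H := mono_le (fun y => ln (1+y) - 2*y/(2+y)) (fun y => y^2/((1+y)*(2+y)^2)) 0 x Hx).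
simpl in H. rewrite Rplus_0_r, ln_1 in H.
assert (2 * 0 / (2 + 0) = 0) as E by field. rewrite E in H.
cut (0 - 0 <= ln (1 + x) - 2 * x / (2 + x)). lra.
apply H.
- intros y Hy. auto_derive. split; [lra|split;[lra|auto]]. field. lra.
- intros y Hy. apply Rmult_le_pos. nra. left. apply Rinv_0_lt_compat. nra.
Qed.

Lemma L2 x : 0 <= x -> ln (1+x) <= x - x^2/2 + x^3/3.
Proof.
intros Hx.
assert (H := mono_le (fun y => y - y^2/2 + y^3/3 - ln (1+y)) (fun y => y^3/(1+y)) 0 x Hx).
simpl in H. rewrite Rplus_0_r, ln_1 in H.
cut (0 <= x - x ^ 2 / 2 + x ^ 3 / 3 - ln (1 + x)). lra.
replace 0 with (0 - 0 * (0 * 1) / 2 + 0 * (0 * (0 * 1)) / 3 - 0) at 1 by field.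
apply H.
- intros y Hy. auto_derive. lra. field. lra.
- intros y Hy. apply Rmult_le_pos. nra. left. apply Rinv_0_lt_compat. nra.
Qed.

Lemma fS m x : f_dens (S m) x = if Rle_dec x (INR m + 1) then G m (INR m + 1 - x) else 0.
Proof.
unfold f_dens, G. rewrite S_INR. replace (S m - 1)%nat with m by lia. reflexivity.
Qed.

Lemma f_nonneg m x : 0 <= f_dens (S m) x.
Proof.
rewrite fS. destruct (Rle_dec x (INR m + 1)). apply G_nonneg; lra. lra.
Qed.

Lemma G_le_inc m p q : (1 <= m)%nat -> 0 <= p -> p <= q -> q <= INR m -> G m p <= G m q.
Proof.
intros. destruct (Req_dec p q) as [->|]. lra. left; apply G_inc; auto; lra.
Qed.

Lemma G_le_dec m p q : (1 <= m)%nat -> INR m <= p -> p <= q -> G m q <= G m p.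
Proof.
intros. destruct (Req_dec p q) as [->|]. lra. left; apply G_dec; auto; lra.
Qed.

Lemma part_i1 n : (2 <= n)%nat -> forall x y : R, x <= y -> y <= 1 -> f_dens n x <= f_dens n y.
Proof.
intros Hn x y Hxy Hy. destruct n as [|m]; [lia|].
assert (1 <= INR m) by (apply (le_INR 1); lia).
rewrite !fS. destruct (Rle_dec x (INR m + 1)); [|lra].
destruct (Rle_dec y (INR m + 1)); [|lra].
apply G_le_dec; try lia; lra.
Qed.

Lemma part_i2 n : (2 <= n)%nat -> forall x y : R, 1 <= x -> x <= y -> f_dens n y <= f_dens n x.
Proof.
intros Hn x y Hx Hxy. destruct n as [|m]; [lia|].
assert (1 <= INR m) by (apply (le_INR 1); lia).
destruct (Rle_dec y (INR m + 1)).
- rewrite !fS. destruct (Rle_dec x (INR m + 1)); [|lra].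
  destruct (Rle_dec y (INR m + 1)); [|lra].
  apply G_le_inc; try lia; lra.
- rewrite (fS m y). destruct (Rle_dec y (INR m + 1)); [lra|]. apply f_nonneg.
Qed.

Lemma part_i3 n : (2 <= n)%nat -> forall x : R, f_dens n x <= f_dens n 1.
Proof.
intros Hn x. destruct (Rle_dec x 1).
apply part_i1; auto; lra. apply part_i2; auto; lra.
Qed.

Lemma G_sym m x : (1 <= m)%nat -> 0 <= x <= INR m -> G m (INR m - x) <= G m (INR m + x).
Proof.
intros Hm [Hx0 Hxm].
assert (Hm0 : 0 < INR m) by (apply lt_0_INR; lia).
destruct (Req_dec x 0) as [->|Hx]. rewrite Rminus_0_r, Rplus_0_r. lra.
destruct (Req_dec x (INR m)) as [->|Hxm']. rewrite Rminus_diag, G0 by auto.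
apply G_nonneg; lra.
assert (Hp : 0 < INR m - x) by lra. assert (Hq : 0 < INR m + x) by lra.
rewrite (G_ident m _ _ Hp Hq).
set (r := (INR m - x) / (INR m + x)).
assert (Hr0 : 0 < r) by (apply Rdiv_lt_0_compat; lra).
assert (Hln := L1 (2 * x / (INR m - x)) ltac:(apply Rmult_le_pos; [lra| left; apply Rinv_0_lt_compat; lra])).
replace (2 * (2 * x / (INR m - x)) / (2 + 2 * x / (INR m - x))) with (2 * x / INR m) in Hln by (field; lra).
replace (1 + 2 * x / (INR m - x)) with (/ r) in Hln by (unfold r; field; lra).
assert (Hr1 : r <= exp (- (2 * x / INR m))).
{ rewrite exp_Ropp.
  assert (He : exp (2 * x / INR m) <= / r).
  { rewrite <- (exp_ln (/ r)) by (apply Rinv_0_lt_compat; lra).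
    destruct Hln as [Hl|Hl]; [left; apply exp_increasing; auto|right; f_equal; auto]. }
  rewrite <- (Rinv_inv r). apply Rinv_le_contravar; auto. apply exp_pos. }
assert (Hrm : r ^ m <= exp (- (2 * x))).
{ replace (- (2 * x)) with (INR m * (- (2 * x / INR m))) by (field; lra).
  rewrite exp_INR_mult. apply pow_incr. lra. }
assert (Hg := G_pos m (INR m + x) Hq).
assert (E : exp (- (2 * x)) * exp (INR m + x - (INR m - x)) = 1).
{ rewrite <- exp_plus. replace (- (2 * x) + (INR m + x - (INR m - x))) with 0 by ring. apply exp_0. }
assert (0 < exp (INR m + x - (INR m - x))) by apply exp_pos.
assert (r ^ m * exp (INR m + x - (INR m - x)) <= 1) by nra.
nra.
Qed.

Lemma part_ii n : (2 <= n)%nat -> forall x : R, 0 <= x -> f_dens n (1 + x) <= f_dens n (1 - x).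
Proof.
intros Hn x Hx. destruct n as [|m]; [lia|].
assert (1 <= INR m) by (apply (le_INR 1); lia).
rewrite !fS. destruct (Rle_dec (1 - x) (INR m + 1)); [|lra].
destruct (Rle_dec (1 + x) (INR m + 1)).
- replace (INR m + 1 - (1 + x)) with (INR m - x) by ring.
  replace (INR m + 1 - (1 - x)) with (INR m + x) by ring.
  apply G_sym; [lia|lra].
- apply G_nonneg; lra.
Qed.

Lemma G_cont m t : continuity_pt (G m) t.
Proof.
apply continuity_pt_filterlim. apply (ex_derive_continuous (K:=R_AbsRing) (V:=R_NormedModule) (G m)). unfold G.
assert (H := fact_pos m). assert (0 < exp t) by apply exp_pos.
auto_derive. apply Rgt_not_eq. nra.
Qed.

Lemma part_iii n : (2 <= n)%nat -> forall z : R, 0 <= z ->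
  exists! b : R, 0 <= b <= z /\ f_dens n (1 - z) = f_dens n (1 + z - b).
Proof.
intros Hn z Hz. destruct n as [|m]; [lia|].
assert (Hm1 : (1 <= m)%nat) by lia.
assert (1 <= INR m) by (apply (le_INR 1); lia).
assert (Hv : f_dens (S m) (1 - z) = G m (INR m + z)).
{ rewrite fS. destruct (Rle_dec (1 - z) (INR m + 1)); [|lra]. f_equal; ring. }
assert (Hvp : 0 < G m (INR m + z)) by (apply G_pos; lra).
set (a0 := Rmax 0 (INR m - z)).
assert (Ha0 : 0 <= a0 <= INR m) by (unfold a0; split; [apply Rmax_l| apply Rmax_lub; lra]).
assert (Hga : G m a0 <= G m (INR m + z)).
{ unfold a0. apply Rmax_case_strong; intro Hc.
  - rewrite G0 by auto. lra.
  - apply G_sym; auto; lra. }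
assert (Hgm : G m (INR m + z) <= G m (INR m)) by (apply G_le_dec; auto; lra).
destruct (IVT_gen (G m) a0 (INR m) (G m (INR m + z))) as [t [Ht Hgt]].
{ intro; apply G_cont. }
{ assert (G m a0 <= G m (INR m)) by lra.
  rewrite Rmin_left, Rmax_right by lra. lra. }
rewrite Rmin_left, Rmax_right in Ht by lra.
assert (Huniq : forall b, 0 <= b <= z -> f_dens (S m) (1 - z) = f_dens (S m) (1 + z - b) ->
   INR m - z + b = t).
{ intros b Hb Hfb. rewrite Hv, fS in Hfb.
  destruct (Rle_dec (1 + z - b) (INR m + 1)) as [Hle|]; [|lra].
  replace (INR m + 1 - (1 + z - b)) with (INR m - z + b) in Hfb by ring.
  destruct (Rtotal_order (INR m - z + b) t) as [Hlt|[Heq|Hgt']]; auto.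
  - assert (G m (INR m - z + b) < G m t) by (apply G_inc; auto; lra). lra.
  - assert (G m t < G m (INR m - z + b)) by (apply G_inc; auto; lra). lra. }
exists (z - INR m + t). split.
- split. assert (INR m - z <= a0) by apply Rmax_r. lra.
  rewrite Hv, fS. destruct (Rle_dec (1 + z - (z - INR m + t)) (INR m + 1)); [|lra].
  replace (INR m + 1 - (1 + z - (z - INR m + t))) with t by ring. auto.
- intros b [Hb Hfb]. assert (H1 := Huniq b Hb Hfb). lra.
Qed.

Lemma alg K P s c : c*c = 1 - s*s -> 1 * c * (K*P) * c + s * P * (1 * - s) = K*P - (K+1)*(s^(S (S 0)) * P).
Proof. intros H. replace (1 * c * (K*P) * c) with (K*P*(c*c)) by ring. rewrite H. simpl. ring. Qed.

Lemma dI k x : is_derive (fun x => sin x ^ (S k) * cos x) x (INR (S k) * sin x ^ k - INR (S (S k)) * sin x ^ (S (S k))).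
Proof.
intros. auto_derive. auto. change (match k with 0%nat => 1 | S _ => INR k + 1 end) with (INR (S k)).
rewrite (S_INR (S k)). replace (sin x ^ S (S k)) with (sin x ^ 2 * sin x ^ k) by (rewrite <- pow_add; reflexivity). apply alg.
assert (H := sin2_cos2 x). unfold Rsqr in H. lra.
Qed.

Lemma minusR (a b : R) : minus a b = a - b.
Proof. reflexivity. Qed.

Definition I k := RInt (fun x => sin x ^ k) 0 (PI/2).

Lemma ex_I k : ex_RInt (fun x => sin x ^ k) 0 (PI/2).
Proof.
apply (ex_RInt_continuous (V:=R_CompleteNormedModule)). intros z _.
apply (ex_derive_continuous (K:=R_AbsRing) (V:=R_NormedModule)). auto_derive. auto.
Qed.

Lemma I_rec k : INR (S (S k)) * I (S (S k)) = INR (S k) * I k.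
Proof.
assert (H1 := is_RInt_derive (fun x => sin x ^ S k * cos x)
  (fun x => INR (S k) * sin x ^ k - INR (S (S k)) * sin x ^ S (S k)) 0 (PI/2)
  (fun x _ => dI k x)).
assert (H2 : is_RInt (fun x => INR (S k) * sin x ^ k - INR (S (S k)) * sin x ^ S (S k)) 0 (PI/2)
   (INR (S k) * I k - INR (S (S k)) * I (S (S k)))).
{ apply (is_RInt_minus (fun x => INR (S k) * sin x ^ k) (fun x => INR (S (S k)) * sin x ^ S (S k)));
  apply (is_RInt_scal (fun x => sin x ^ _)); unfold I; apply (RInt_correct (V:=R_CompleteNormedModule)), ex_I. }
assert (H3 : forall x, Rmin 0 (PI/2) <= x <= Rmax 0 (PI/2) ->
   continuous (fun x => INR (S k) * sin x ^ k - INR (S (S k)) * sin x ^ S (S k)) x).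
{ intros x _. apply (ex_derive_continuous (K:=R_AbsRing) (V:=R_NormedModule)). auto_derive. auto. }
specialize (H1 H3). apply (is_RInt_unique (V:=R_CompleteNormedModule)) in H1. apply (is_RInt_unique (V:=R_CompleteNormedModule)) in H2.
rewrite H2 in H1. rewrite cos_PI2, sin_0 in H1. rewrite pow_i in H1 by lia.
assert (E : INR (S k) * I k - INR (S (S k)) * I (S (S k)) = 0).
{ rewrite H1. unfold minus. rewrite Rmult_0_r, Rmult_0_l. exact (plus_opp_r 0). }
lra.
Qed.

Lemma I0 : I 0 = PI/2.
Proof. unfold I. simpl. rewrite RInt_const. unfold scal. simpl. unfold mult. simpl. ring. Qed.

Lemma I1 : I 1 = 1.
Proof.
assert (H : is_RInt (fun x => sin x ^ 1) 0 (PI/2) (minus (- cos (PI/2)) (- cos 0))).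
{ apply (is_RInt_derive (fun x => - cos x) (fun x => sin x ^ 1) 0 (PI/2)).
- intros x _. auto_derive. auto. ring.
- intros x _. apply (ex_derive_continuous (K:=R_AbsRing) (V:=R_NormedModule)). auto_derive. auto. }
unfold I. rewrite (is_RInt_unique (V:=R_CompleteNormedModule) _ _ _ _ H).
change (- cos (PI/2) - - cos 0 = 1). rewrite cos_PI2, cos_0. ring.
Qed.

Lemma I_decr k : I (S k) <= I k.
Proof.
unfold I. apply RInt_le. left; apply PI2_RGT_0. apply ex_I. apply ex_I.
intros x Hx. assert (0 <= sin x) by (apply sin_ge_0; assert (H := PI_RGT_0); lra).
assert (H1 := SIN_bound x). simpl. assert (0 <= sin x ^ k) by (apply pow_le; auto). nra.
Qed.

Fixpoint p (k : nat) : R := match k with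
  | O => 1
  | S k' => p k' * (2 * INR k' + 1) / (2 * INR k' + 2) end.

Lemma p_pos k : 0 < p k.
Proof.
induction k; simpl p. lra. assert (0 <= INR k) by apply pos_INR.
apply Rdiv_lt_0_compat; [apply Rmult_lt_0_compat|]; lra.
Qed.

Lemma INR2k k : INR (2 * k) = 2 * INR k.
Proof. rewrite mult_INR. simpl. ring. Qed.

Lemma I_even k : I (2 * k) = PI / 2 * p k.
Proof.
induction k. simpl. rewrite I0. ring.
replace (2 * S k)%nat with (S (S (2 * k))) by lia.
assert (H := I_rec (2 * k)). rewrite !S_INR, INR2k in H.
assert (0 <= INR k) by apply pos_INR.
simpl p. rewrite IHk in H.
apply (Rmult_eq_reg_l (2 * INR k + 1 + 1)); [|lra].
rewrite H. field. lra.
Qed.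

Lemma I_odd k : I (2 * k + 1) = / ((2 * INR k + 1) * p k).
Proof.
induction k. simpl. rewrite I1. field.
replace (2 * S k + 1)%nat with (S (S (2 * k + 1))) by lia.
assert (H := I_rec (2 * k + 1)). rewrite !S_INR, plus_INR, INR2k in H.
assert (0 <= INR k) by apply pos_INR. assert (Hp := p_pos k).
simpl p. rewrite IHk in H. rewrite S_INR.
apply (Rmult_eq_reg_l (2 * INR k + 1 + 1 + 1)); [|lra].
simpl INR in H. rewrite H. field. split; lra.
Qed.

Lemma p_bounds j : 2 / ((2 * INR (S j) + 1) * PI) <= p (S j) ^ 2 <= / (INR (S j) * PI).
Proof.
assert (HPI := PI_RGT_0).
assert (Hj : 0 <= INR j) by apply pos_INR.
assert (Hp := p_pos (S j)). assert (Hp0 := p_pos j).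
split.
- assert (H := I_decr (2 * S j)). replace (S (2 * S j)) with (2 * S j + 1)%nat in H by lia. rewrite I_odd, I_even in H.
  rewrite S_INR in *.
  apply (Rmult_le_reg_r (/ (2 * (INR j + 1) + 1) / p (S j) * 2 / PI)).
  { apply Rmult_lt_0_compat; [|apply Rinv_0_lt_compat; lra].
    apply Rmult_lt_0_compat; [|lra]. apply Rdiv_lt_0_compat; [|lra]. apply Rinv_0_lt_compat; lra. }
  replace (2 / ((2 * (INR j + 1) + 1) * PI) * (/ (2 * (INR j + 1) + 1) / p (S j) * 2 / PI))
    with (/ ((2 * (INR j + 1) + 1) * p (S j)) * (4 / ((2 * (INR j + 1) + 1) * PI * PI))) by (field; repeat split; lra).
  replace (p (S j) ^ 2 * (/ (2 * (INR j + 1) + 1) / p (S j) * 2 / PI))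
    with (PI / 2 * p (S j) * (4 / ((2 * (INR j + 1) + 1) * PI * PI))) by (field; repeat split; lra).
  apply Rmult_le_compat_r; auto.
  apply Rlt_le, Rdiv_lt_0_compat; [lra|]. apply Rmult_lt_0_compat; [apply Rmult_lt_0_compat|]; lra.
- assert (H := I_decr (2 * j + 1)). replace (S (2 * j + 1)) with (2 * S j)%nat in H by lia.
  rewrite I_odd, I_even in H.
  assert (E : p (S j) = p j * (2 * INR j + 1) / (2 * INR j + 2)) by reflexivity.
  rewrite E in H |- *. rewrite S_INR.
  assert (H' : PI / 2 * (p j * (2 * INR j + 1) / (2 * INR j + 2)) * (p j * (2 * INR j + 1) / (2 * INR j + 2))
     <= / ((2 * INR j + 1) * p j) * (p j * (2 * INR j + 1) / (2 * INR j + 2))).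
  { apply Rmult_le_compat_r; auto. rewrite <- E; lra. }
  replace (/ ((2 * INR j + 1) * p j) * (p j * (2 * INR j + 1) / (2 * INR j + 2))) with (/ (2 * INR j + 2)) in H' by (field; split; lra).
  apply (Rmult_le_reg_l (PI / 2)). lra.
  replace (PI / 2 * / ((INR j + 1) * PI)) with (/ (2 * INR j + 2)) by (field; split; lra).
  replace (PI / 2 * (p j * (2 * INR j + 1) / (2 * INR j + 2)) ^ 2) with
    (PI / 2 * (p j * (2 * INR j + 1) / (2 * INR j + 2)) * (p j * (2 * INR j + 1) / (2 * INR j + 2))) by ring.
  exact H'.
Qed.

Definition la (m : nat) : R := ln (INR (fact m)) + INR m - (INR m + / 2) * ln (INR m).

Lemma la_step m : (1 <= m)%nat -> la m - la (S m) = (INR m + / 2) * ln (1 + / INR m) - 1.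
Proof.
intros Hm. assert (Hx : 1 <= INR m) by (apply (le_INR 1); lia).
unfold la. rewrite fact_simpl, mult_INR, ln_mult; [| rewrite S_INR; lra | apply fact_pos].
rewrite S_INR.
replace (INR m + 1) with (INR m * (1 + / INR m)) by (field; lra).
rewrite ln_mult; [|lra|]. 2: { assert (0 < / INR m) by (apply Rinv_0_lt_compat; lra). lra. }
replace (INR m * (1 + / INR m)) with (INR m + 1) by (field; lra). ring.
Qed.

Lemma la_dec m : (1 <= m)%nat -> la (S m) <= la m.
Proof.
intros Hm. assert (Hx : 1 <= INR m) by (apply (le_INR 1); lia).
assert (H := la_step m Hm).
assert (Hi : 0 <= / INR m) by (left; apply Rinv_0_lt_compat; lra).
assert (H1 := L1 _ Hi).
assert (E : (INR m + / 2) * (2 * / INR m / (2 + / INR m)) = 1) by (field; lra).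
assert ((INR m + / 2) * (2 * / INR m / (2 + / INR m)) <= (INR m + / 2) * ln (1 + / INR m)).
{ apply Rmult_le_compat_l; lra. }
lra.
Qed.

Lemma la_step_ub m : (1 <= m)%nat -> la m - la (S m) <= / (2 * INR m) - / (2 * INR (S m)).
Proof.
intros Hm. assert (Hx : 1 <= INR m) by (apply (le_INR 1); lia).
rewrite la_step by auto. rewrite S_INR.
assert (Hi : 0 <= / INR m) by (left; apply Rinv_0_lt_compat; lra).
assert (H2 := L2 _ Hi).
assert ((INR m + / 2) * ln (1 + / INR m) <= (INR m + / 2) * (/ INR m - (/ INR m) ^ 2 / 2 + (/ INR m) ^ 3 / 3)).
{ apply Rmult_le_compat_l; lra. }
assert (E : (INR m + / 2) * (/ INR m - (/ INR m) ^ 2 / 2 + (/ INR m) ^ 3 / 3) - 1 - (/ (2 * INR m) - / (2 * (INR m + 1)))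
   = - ((5 * INR m + 2) * (INR m - 1)) / (12 * INR m ^ 3 * (INR m + 1))) by (field; lra).
assert (- ((5 * INR m + 2) * (INR m - 1)) / (12 * INR m ^ 3 * (INR m + 1)) <= 0).
{ unfold Rdiv. cut (0 <= (5 * INR m + 2) * (INR m - 1) * / (12 * INR m ^ 3 * (INR m + 1))). lra. apply Rmult_le_pos. apply Rmult_le_pos; lra. left; apply Rinv_0_lt_compat. assert (0 < INR m ^ 3) by (apply pow_lt; lra). nra. }
lra.
Qed.

Lemma la1 : la 1 = 1.
Proof. unfold la. simpl. rewrite ln_1. ring. Qed.

Lemma la_lb k : 1 / 2 <= la (S k).
Proof.
assert (H : forall k, 1 / 2 <= la (S k) - / (2 * INR (S k))).
{ clear k. intro k. induction k. change (1 / 2 <= la 1 - / (2 * INR 1)). rewrite la1. simpl. lra.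
  assert (H := la_step_ub (S k) ltac:(lia)). lra. }
specialize (H k). assert (0 < / (2 * INR (S k))).
{ apply Rinv_0_lt_compat. rewrite S_INR. assert (0 <= INR k) by apply pos_INR. lra. }
lra.
Qed.

Lemma la_cv : { L : R | is_lim_seq (fun k => la (S k)) L }.
Proof.
destruct (decreasing_cv (fun k => la (S k))) as [L HL].
- intro n. apply la_dec. lia.
- exists (- (1 / 2)). intros x [i ->]. unfold opp_seq. assert (H := la_lb i). lra.
- exists L. apply is_lim_seq_Reals. exact HL.
Qed.

Lemma fact2k k : INR (fact (2 * k)) = p k * 4 ^ k * INR (fact k) ^ 2.
Proof.
induction k. simpl. ring.
replace (2 * S k)%nat with (S (S (2 * k))) by lia.
rewrite !fact_simpl, !mult_INR, IHk, !S_INR, INR2k. simpl p.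
assert (0 <= INR k) by apply pos_INR.
change (4 ^ S k) with (4 * 4 ^ k). field. lra.
Qed.

Lemma la_rel j : la (2 * S j) - 2 * la (S j) = (ln (INR (S j) * p (S j) ^ 2) - ln 2) / 2.
Proof.
set (k := S j).
assert (Hk : 0 < INR k) by (apply lt_0_INR; unfold k; lia).
assert (Hp := p_pos k). assert (Hf := fact_pos k).
unfold la. rewrite fact2k, INR2k.
rewrite !ln_mult; try lra; try (apply pow_lt; lra); try (apply Rmult_lt_0_compat; try lra; apply pow_lt; lra).
rewrite !ln_pow; try lra.
replace 4 with (2 * 2) by ring. rewrite ln_mult by lra. replace (INR 2) with 2 by (simpl; ring). field.
Qed.

Lemma lim_inv_aff a b : 0 < a -> 0 < b -> is_lim_seq (fun j => / (a * INR j + b)) 0.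
Proof.
intros Ha Hb.
assert (H : is_lim_seq (fun j => a * INR j + b) p_infty).
{ apply (is_lim_seq_plus _ _ p_infty b p_infty).
  - replace p_infty with (Rbar_mult a p_infty).
    apply is_lim_seq_scal_l. apply is_lim_seq_INR.
    simpl. destruct (Rle_dec 0 a); [|lra]. destruct (Rle_lt_or_eq_dec 0 a r); [reflexivity|lra].
  - apply is_lim_seq_const.
  - simpl. reflexivity. }
apply (is_lim_seq_inv _ _ H). discriminate.
Qed.

Lemma cont_ln x : 0 < x -> continuity_pt ln x.
Proof.
intros Hx. apply continuity_pt_filterlim.
apply (ex_derive_continuous (K:=R_AbsRing) (V:=R_NormedModule) ln). auto_derive. auto.
Qed.

Lemma cont_exp x : continuity_pt exp x.
Proof.
apply continuity_pt_filterlim.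
apply (ex_derive_continuous (K:=R_AbsRing) (V:=R_NormedModule) exp). auto_derive. auto.
Qed.

Lemma lim_kp : is_lim_seq (fun j => INR (S j) * p (S j) ^ 2) (/ PI).
Proof.
assert (HPI := PI_RGT_0).
apply (is_lim_seq_le_le (fun j => / PI * (1 - / (2 * INR j + 3))) _ (fun _ => / PI)).
- intro j. assert (Hj : 0 <= INR j) by apply pos_INR.
  destruct (p_bounds j) as [H1 H2]. rewrite S_INR in *. split.
  + replace (/ PI * (1 - / (2 * INR j + 3))) with ((INR j + 1) * (2 / ((2 * (INR j + 1) + 1) * PI))) by (field; lra).
    apply Rmult_le_compat_l; lra.
  + replace (/ PI) with ((INR j + 1) * / ((INR j + 1) * PI)) by (field; lra).
    apply Rmult_le_compat_l; lra.
- replace (Finite (/ PI)) with (Finite (/ PI * (1 - 0))) by (f_equal; ring).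
  apply is_lim_seq_mult'. apply is_lim_seq_const.
  apply is_lim_seq_minus'. apply is_lim_seq_const. apply lim_inv_aff; lra.
- apply is_lim_seq_const.
Qed.

Lemma sqrt_exp_ln x : 0 < x -> sqrt x = exp (ln x / 2).
Proof.
intros Hx. rewrite <- (sqrt_square (exp (ln x / 2))) by (left; apply exp_pos).
f_equal. rewrite <- exp_plus. replace (ln x / 2 + ln x / 2) with (ln x) by field. rewrite exp_ln; auto.
Qed.

Lemma Lambda_val (L : R) : is_lim_seq (fun k => la (S k)) L -> L = ln (2 * PI) / 2.
Proof.
intros HL. assert (HPI := PI_RGT_0).
assert (Ha : is_lim_seq (fun j => la (2 * S j) - 2 * la (S j)) (L - 2 * L)).
{ apply is_lim_seq_minus'.
  - assert (Hs := is_lim_seq_subseq _ _ (fun j => (2 * j + 1)%nat) (eventually_subseq (fun j => (2 * j + 1)%nat) ltac:(intros n; cbv beta; lia)) HL).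
    apply (is_lim_seq_ext (fun j => la (S (2 * j + 1)))); [|exact Hs].
    intro j. f_equal. lia.
  - apply (is_lim_seq_scal_l _ 2 L) in HL. exact HL. }
assert (Hb : is_lim_seq (fun j => la (2 * S j) - 2 * la (S j)) ((ln (/ PI) - ln 2) / 2)).
{ apply (is_lim_seq_ext (fun j => (ln (INR (S j) * p (S j) ^ 2) - ln 2) / 2)).
  intro j. symmetry. apply la_rel.
  apply is_lim_seq_div'; [|apply is_lim_seq_const|lra].
  apply is_lim_seq_minus'; [|apply is_lim_seq_const].
  apply is_lim_seq_continuous. apply cont_ln. apply Rinv_0_lt_compat; lra. apply lim_kp. }
apply is_lim_seq_unique in Ha. apply is_lim_seq_unique in Hb.
rewrite Ha in Hb. injection Hb. intro E.
rewrite ln_Rinv in E by lra. rewrite ln_mult by lra. lra.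
Qed.

Lemma G_la m : (1 <= m)%nat -> G m (INR m) * exp (la m) * sqrt (INR m) = 1.
Proof.
intros Hm. assert (Hx : 0 < INR m) by (apply lt_0_INR; lia).
assert (Hf := fact_pos m).
unfold G, la. rewrite sqrt_exp_ln by auto.
replace ((INR m + / 2) * ln (INR m)) with (ln (INR m ^ m) + ln (INR m) / 2) by (rewrite ln_pow by auto; field).
replace (ln (INR (fact m)) + INR m - (ln (INR m ^ m) + ln (INR m) / 2)) with
  (ln (INR (fact m)) + INR m + - ln (INR m ^ m) + - (ln (INR m) / 2)) by ring.
rewrite !exp_plus, !exp_Ropp, !exp_ln; auto; [|apply pow_lt; auto].
assert (0 < exp (INR m)) by apply exp_pos.
assert (0 < exp (ln (INR m) / 2)) by apply exp_pos.
assert (0 < INR m ^ m) by (apply pow_lt; auto).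
field. repeat split; lra.
Qed.

Lemma part_lim : is_lim_seq (fun n : nat => f_dens n 1 / (1 / sqrt (2 * PI * INR n))) 1.
Proof.
assert (HPI := PI_RGT_0).
destruct la_cv as [L HL]. assert (HLv := Lambda_val L HL).
apply (proj2 (is_lim_seq_incr_n _ 2 _)).
apply (is_lim_seq_ext (fun j => sqrt (2 * PI) * sqrt (INR (S (S j)) / INR (S j)) / exp (la (S j)))).
- intro j. replace (j + 2)%nat with (S (S j)) by lia.
  rewrite fS. destruct (Rle_dec 1 (INR (S j) + 1)) as [_|Hc].
  2: { exfalso. apply Hc. assert (0 <= INR (S j)) by apply pos_INR. lra. }
  replace (INR (S j) + 1 - 1) with (INR (S j)) by ring.
  assert (H := G_la (S j) ltac:(lia)).
  assert (Hm : 0 < INR (S j)) by (apply lt_0_INR; lia).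
  assert (Hn : 0 < INR (S (S j))) by (apply lt_0_INR; lia).
  assert (0 < exp (la (S j))) by apply exp_pos.
  assert (0 < sqrt (INR (S j))) by (apply sqrt_lt_R0; auto).
  assert (0 < sqrt (INR (S (S j)))) by (apply sqrt_lt_R0; auto).
  assert (0 < sqrt (2 * PI)) by (apply sqrt_lt_R0; lra).
  rewrite sqrt_div by lra. rewrite (sqrt_mult (2 * PI) (INR (S (S j)))) by lra.
  replace (G (S j) (INR (S j))) with (/ (exp (la (S j)) * sqrt (INR (S j)))).
  field. repeat split; lra.
  symmetry. apply (Rmult_eq_reg_r (exp (la (S j)) * sqrt (INR (S j)))). rewrite <- Rmult_assoc, H. field. lra.
  apply Rgt_not_eq. apply Rmult_lt_0_compat; lra.
- assert (HeL : exp L = sqrt (2 * PI)) by (rewrite HLv; symmetry; apply sqrt_exp_ln; lra).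
  replace (Finite 1) with (Finite (sqrt (2 * PI) * sqrt 1 / exp L)).
  2: { f_equal. rewrite sqrt_1, HeL. field. apply Rgt_not_eq, sqrt_lt_R0. lra. }
  apply is_lim_seq_div'.
  + apply is_lim_seq_mult'. apply is_lim_seq_const.
    apply is_lim_seq_continuous. apply continuity_pt_sqrt. lra.
    apply (is_lim_seq_ext (fun j => 1 + / (1 * INR j + 1))).
    { intro j. rewrite !S_INR. assert (0 <= INR j) by apply pos_INR. field. lra. }
    replace (Finite 1) with (Finite (1 + 0)) by (f_equal; ring).
    apply is_lim_seq_plus'. apply is_lim_seq_const. apply lim_inv_aff; lra.
  + apply is_lim_seq_continuous. apply cont_exp. exact HL.
  + apply Rgt_not_eq. apply exp_pos.
Qed.

Theorem lemma3 :
  (* (i) unimodality with maximum at x = 1 *)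
  (forall n : nat, (2 <= n)%nat ->
     (forall x y : R, x <= y -> y <= 1 -> f_dens n x <= f_dens n y) /\
     (forall x y : R, 1 <= x -> x <= y -> f_dens n y <= f_dens n x) /\
     (forall x : R, f_dens n x <= f_dens n 1)) /\
  (* (i) f_n(1) ~ 1/sqrt(2 pi n) as n -> oo *)
  is_lim_seq (fun n : nat => f_dens n 1 / (1 / sqrt (2 * PI * INR n))) 1 /\
  (* (ii) *)
  (forall n : nat, (2 <= n)%nat ->
     forall x : R, 0 <= x -> f_dens n (1 + x) <= f_dens n (1 - x)) /\
  (* (iii) *)
  (forall n : nat, (2 <= n)%nat ->
     forall z : R, 0 <= z ->
       exists! b : R, 0 <= b <= z /\ f_dens n (1 - z) = f_dens n (1 + z - b)).
Proof.
split; [|split; [|split]].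
- intros n Hn. split; [|split]. apply part_i1; auto. apply part_i2; auto. apply part_i3; auto.
- apply part_lim.
- apply part_ii.
- apply part_iii.
Qed.
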